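(* Let $q\ge 3$ be odd and $n\ge 1$. There exists an ordering of all words of $\mathbb{Z}_q^{n}$ in which consecutive words have Lee distance $1$, beginning with $(0,0,\ldots,0)$ and ending with $(1,1,\ldots,1)$.
   Context: Lee distance between $v,u\in\mathbb{Z}_q^{n}$ is $\sum_{i}\min\{|v_i-u_i|,q-|v_i-u_i|\}$, entries regarded as integers in $\{0,\ldots,q-1\}$. *)

(* Defs.v *)
From mathcomp Require Import all_boot all_order.
Set Implicit Arguments. Unset Strict Implicit. Unset Printing Implicit Defensive.

Definition word (q n : nat) := {ffun 'I_n -> 'I_q}.

Definition natdist (a b : nat) : nat := (a - b) + (b - a).

Definition lee_dist (q n : nat) (v u : word q n) : nat :=
  \sum_(i < n) minn (natdist (v i) (u i)) (q - natdist (v i) (u i)).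

(* Main.v *)
Require Import Defs.
From mathcomp Require Import all_boot all_order.
From mathcomp Require Import zify.
Set Implicit Arguments. Unset Strict Implicit. Unset Printing Implicit Defensive.

Definition wcons q n (x : 'I_q) (v : word q n) : word q n.+1 :=
  [ffun i : 'I_n.+1 => if unlift ord0 i is Some j then v j else x].
Definition wtail q n (w : word q n.+1) : word q n := [ffun j => w (lift ord0 j)].

Lemma wcons_tail q n (w : word q n.+1) : wcons (w ord0) (wtail w) = w.
Proof. apply/ffunP => i; rewrite !ffunE; case: unliftP => [j ->|->]; by rewrite ?ffunE. Qed.

Lemma wconsP q n (P : nat -> Prop) (x : 'I_q) (v : word q n) :
  P x -> (forall j, P (v j)) -> forall i, P (wcons x v i).
Proof. move=> Px Pv i; rewrite ffunE; by case: unliftP => [j _|_]. Qed.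

Definition fq q (a b : nat) := minn (natdist a b) (q - natdist a b).

Lemma lee_cons q n x y (v u : word q n) :
  lee_dist (wcons x v) (wcons y u) = fq q x y + lee_dist v u.
Proof.
rewrite /lee_dist big_ord_recl !ffunE unlift_none; congr (_ + _).
by apply: eq_bigr => i _; rewrite !ffunE liftK.
Qed.

Lemma lee_distC q n (v u : word q n) : lee_dist v u = lee_dist u v.
Proof. by rewrite /lee_dist; apply: eq_bigr => i _; rewrite /natdist addnC. Qed.

Lemma lee_dist0 q n (v : word q n) : lee_dist v v = 0.
Proof. by rewrite /lee_dist big1 // => i _; rewrite /natdist subnn addn0 min0n. Qed.

Definition adj q n (v u : word q n) := lee_dist v u == 1.

Fixpoint aux q n (L : seq 'I_q) (P : seq (word q n)) : seq (word q n.+1) :=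
  if L is x :: L' then map (wcons x) P ++ aux L' (rev P) else [::].

Lemma size_aux q n L P : size (@aux q n L P) = size L * size P.
Proof. by elim: L P => [|x L IH] P //=; rewrite size_cat size_map IH size_rev mulSn. Qed.

Lemma mem_aux q n L P x v : x \in L -> v \in P -> wcons x v \in @aux q n L P.
Proof.
elim: L P => [|y L IH] P //=; rewrite in_cons mem_cat => /orP[/eqP->|xL] vP; apply/orP.
  by left; apply: map_f.
by right; apply: IH; rewrite ?mem_rev.
Qed.

Lemma adj_same q n (x : 'I_q) : subrel (@adj q n) (relpre (wcons x) (@adj q n.+1)).
Proof. by move=> v u; rewrite /= /adj lee_cons /fq /natdist subnn addn0 min0n. Qed.

Lemma rev_last (T : Type) (a : T) P' :
  rev (a :: P') = last a P' :: rev (belast a P').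
Proof. by rewrite lastI rev_rcons. Qed.

Lemma sorted_aux q n (L : seq 'I_q) x a (P' : seq (word q n)) :
  sorted (fun x y : 'I_q => fq q x y == 1) (x :: L) -> sorted (@adj q n) (a :: P') ->
  sorted (@adj q n.+1) (aux (x :: L) (a :: P')).
Proof.
elim: L x a P' => [|y L IH] x a P' HL HP.
  rewrite /= cats0 path_map; exact: sub_path (adj_same x) _ _ HP.
have HR : sorted (@adj q n) (rev (a :: P')).
  rewrite rev_sorted; apply: sub_sorted HP => v u; by rewrite /adj lee_distC.
move: HL => /= /andP [Hxy HL].
rewrite rev_last in HR *; have IH' := IH y _ _ HL HR.
rewrite [aux _ _]/= cat_path; apply/andP; split.
  rewrite path_map; exact: sub_path (adj_same x) _ _ HP.
rewrite last_map [aux _ _]/= map_cons /=. rewrite /= in IH'. rewrite IH' andbT.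
by rewrite /adj lee_cons lee_dist0 addn0.
Qed.

Lemma last_aux q n (L : seq 'I_q) x a (P' : seq (word q n)) d :
  last d (aux (x :: L) (a :: P')) = wcons (last x L) (if odd (size L) then a else last a P').
Proof.
elim: L x a P' d => [|y L IH] x a P' d.
  by rewrite /= cats0 last_map.
have H := IH y (last a P') (rev (belast a P')) d.
rewrite [aux _ _]/= in H.
rewrite [aux _ _]/= rev_last [aux _ _]/= /= last_cat /=.
rewrite /= in H; rewrite H.
case: (odd (size L)) => //=.
have -> : last (last a P') (rev (belast a P')) = last a (rev (a :: P')) by rewrite rev_last.
by rewrite rev_cons last_rcons.
Qed.

Fixpoint desc k := if k is k'.+1 then k :: desc k' else [::].

Lemma desc_path q k : k.+1 < q ->
  path (relpre (@inord q.-1) (fun x y : 'I_q.-1.+1 => fq q.-1.+1 x y == 1)) k.+1 (desc k).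
Proof.
elim: k => [|k IH] Hk //=; rewrite IH ?andbT; last by lia.
rewrite /fq /natdist !inordK; try (apply/eqP); lia.
Qed.

Lemma mem_desc k x : (x \in desc k) = (0 < x <= k).
Proof. elim: k => [|k IH] /=; first by rewrite in_nil; lia. rewrite in_cons IH; lia. Qed.

Lemma last_desc k d : last d (desc k.+1) = 1.
Proof. by elim: k d => [|k IH] d //=; apply: (IH 0). Qed.

Lemma size_desc k : size (desc k) = k.
Proof. by elim: k => //= k ->. Qed.

Lemma sorted_L p : 2 <= p ->
  sorted (fun x y : 'I_p.+1 => fq p.+1 x y == 1) (inord 0 :: map (@inord p) (desc p)).
Proof.
case: p => [|r] // Hp /=; rewrite path_map /=.
rewrite (desc_path (q := r.+2)) ?andbT //.
rewrite /fq /natdist !inordK; try (apply/eqP); lia.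
Qed.

Lemma last_L p : 1 <= p -> last (inord 0) (map (@inord p) (desc p)) = inord 1.
Proof. by case: p => [|r] // Hp; rewrite last_map last_desc. Qed.

Lemma ham p n : 2 <= p -> ~~ odd p ->
  exists a (P' : seq (word p.+1 n)),
    [/\ size (a :: P') = p.+1 ^ n, forall w : word p.+1 n, w \in a :: P',
        sorted (@adj p.+1 n) (a :: P'), forall i, (a i : nat) = 0
      & forall i, (last a P' i : nat) = 1].
Proof.
move=> Hp Hodd; elim: n => [|n [a [P' [Hs Hw Hso H0 H1]]]].
  exists [ffun _ => ord0], [::]; split => //; try by case.
  by move=> w; rewrite mem_seq1; apply/eqP/ffunP => -[].
set Lt := map (@inord p) (desc p).
set a' := wcons (inord 0) a.
set P'' := map (wcons (inord 0)) P' ++ aux Lt (rev (a :: P')).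
have E : a' :: P'' = aux (inord 0 :: Lt) (a :: P') by [].
exists a', P''; rewrite E; split.
- by rewrite size_aux Hs /= size_map size_desc expnS.
- move=> w; rewrite -(wcons_tail w); apply: (@mem_aux _ _ _ _ (w ord0) (wtail w)); last exact: Hw.
  rewrite -[w ord0]inord_val -map_cons; apply: map_f.
  by rewrite in_cons mem_desc; have := ltn_ord (w ord0); lia.
- by apply: sorted_aux => //; apply: sorted_L.
- by apply: (wconsP (P := fun k => k = 0)) => [|j]; rewrite ?inordK ?H0.
- have HL : last a' P'' = wcons (last (inord 0) Lt) (if odd (size Lt) then a else last a P')
    := last_aux Lt (inord 0) a P' a'.
  rewrite HL size_map size_desc (negbTE Hodd) last_L //.
  apply: (wconsP (P := fun k => k = 1)) => [|j]; rewrite ?inordK ?H1. all: try lia.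
Qed.

Theorem lemma4 (q n : nat) (Hq3 : 3 <= q) (Hqodd : odd q) (Hn : 1 <= n) :
  exists s : seq (word q n),
    [/\ uniq s,
        (forall w : word q n, w \in s),
        exists2 w0 : word q n, ohead s = Some w0 & forall i, (w0 i : nat) = 0,
        exists2 w1 : word q n, ohead (rev s) = Some w1 & forall i, (w1 i : nat) = 1
      & forall (i : nat) (w0 : word q n), i.+1 < size s ->
          lee_dist (nth w0 s i) (nth w0 s i.+1) = 1].
Proof.
case: q Hq3 Hqodd => [|p] // Hq3 Hqodd.
have [|a [P' [Hs Hw Hso H0 H1]]] := ham n _ Hqodd; first by lia.
exists (a :: P'); split.
- apply: (leq_size_uniq (enum_uniq (word p.+1 n))) => [w _|]; first exact: Hw.
  by rewrite Hs -cardE card_ffun !card_ord.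
- exact: Hw.
- by exists a.
- by exists (last a P'); rewrite // rev_last.
- by move=> i w0 Hi; apply/eqP; apply: (sortedP w0 Hso).
Qed.
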